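(* For every $c\geq 2$ let $L_c=(1,2,c)$. Then $\lim_{c\to\infty}\rho_{2,L_c}=\frac16$.
   Context: Let $X$ be a finite alphabet with $n\geq 2$ letters and $X^*$ the set of words over $X$; $|v|$ is the length of a word $v$. A code over $X$ is a finite sequence $C=(v_1,\ldots,v_m)$ of words over $X$ such that every $w\in X^*$ has at most one factorization into code-words: if $w=v_{i_1}\cdots v_{i_l}=v_{j_1}\cdots v_{j_{l'}}$ with $l,l'\geq1$, then $l=l'$ and $i_t=j_t$ for all $t$. (Codes are sequences, not sets.) A code $C=(v_1,\ldots,v_m)$ is a prefix code if for all $i,j$, $v_i$ is a prefix of $v_j$ if and only if $i=j$. For a finite sequence $L=(a_1,\ldots,a_m)$ of positive integers, $UD_n(L)$ is the set of all codes $(v_1,\ldots,v_m)$ over an $n$-letter alphabet with $|v_i|=a_i$ for all $i$, $PR_n(L)\subseteq UD_n(L)$ is the subset of prefix codes, and $\rho_{n,L}=|PR_n(L)|/|UD_n(L)|$ (defined when $UD_n(L)\ne\emptyset$). *)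

(* Defs.v *)
From HB Require Import structures.
From mathcomp Require Import all_boot all_order all_algebra.
From mathcomp Require Import all_classical all_reals all_analysis.

Set Implicit Arguments.
Unset Strict Implicit.
Unset Printing Implicit Defensive.

Import Order.TTheory GRing.Theory Num.Theory.

Definition is_code (n m : nat) (v : 'I_m -> seq 'I_n) : Prop :=
  forall s t : seq 'I_m, s != [::] -> t != [::] ->
    flatten (map v s) = flatten (map v t) -> s = t.

Definition is_prefix_code (n m : nat) (v : 'I_m -> seq 'I_n) : Prop :=
  forall i j : 'I_m, prefix (v i) (v j) = (i == j).

Definition words_of_lengths (n : nat) (L : seq nat) : finType :=
  {dffun forall i : 'I_(size L), (nth 0 L i).-tuple 'I_n}.

Definition as_words (n : nat) (L : seq nat) (f : words_of_lengths n L) :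
  'I_(size L) -> seq 'I_n := fun i => val (f i).

Definition UD (n : nat) (L : seq nat) : {set words_of_lengths n L} :=
  [set f | `[< is_code (as_words f) >] ].

Definition PR (n : nat) (L : seq nat) : {set words_of_lengths n L} :=
  [set f | `[< is_code (as_words f) >] && `[< is_prefix_code (as_words f) >] ].

Definition rho (R : fieldType) (n : nat) (L : seq nat) : R :=
  (#|PR n L|%:R / #|UD n L|%:R)%R.

(* Main.v *)
Require Import Defs.
From HB Require Import structures.
From mathcomp Require Import all_boot all_order all_algebra.
From mathcomp Require Import all_classical all_reals all_analysis.
From mathcomp Require Import zify ring lra.
Import Order.TTheory GRing.Theory Num.Theory numFieldNormedType.Exports.
Set Implicit Arguments.
Unset Strict Implicit.
Unset Printing Implicit Defensive.
Definition mk (x y1 y2 : 'I_2) (w : seq 'I_2) : 'I_3 -> seq 'I_2 :=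
  fun i => nth [::] [:: [:: x]; [:: y1; y2]; w] i.

Fixpoint sp (x e : 'I_2) (st : bool) (z : seq 'I_2) : option nat :=
  match z with
  | [::] => None
  | u :: z' => if st then (if u == e then omap S (sp x e false z') else Some 0)
               else omap S (sp x e (u != x) z')
  end.

Lemma sp_cat x e st w z k : sp x e st w = Some k -> sp x e st (w ++ z) = Some k.
Proof.
elim: w st k => [|u w IH] st k //=.
case: st.
- case: (u == e) => //.
  by case E: (sp x e false w) => [k'|] //= [<-]; rewrite (IH _ _ E).
- by case E: (sp x e (u != x) w) => [k'|] //= [<-]; rewrite (IH _ _ E).
Qed.

Fixpoint Lpos (v : 'I_3 -> seq 'I_2) (s : seq 'I_3) : nat :=
  match s with
  | [::] => 0
  | i :: s' => if val i == 2 then 0 else size (v i) + Lpos v s'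
  end.

Lemma spK x y1 e w k (s : seq 'I_3) : y1 != x -> sp x e false w = Some k ->
  sp x e false (flatten (map (mk x y1 e w) s)) =
  if has (fun i => val i == 2) s then Some (Lpos (mk x y1 e w) s + k) else None.
Proof.
move=> ny1 hw; elim: s => [|i s IH] //=.
case: i => [[|[|[|i]]] Hi] //=.
- by rewrite eqxx /= IH; case: has.
- by rewrite (negbTE ny1) /= eqxx /= IH; case: has.
- by rewrite (sp_cat _ hw).
Qed.

Lemma mk_pos x y1 y2 w (i : 'I_3) : 0 < size w -> 0 < size (mk x y1 y2 w i).
Proof. by case: i => [[|[|[|i]]] Hi] //=. Qed.

Lemma code_stuck x y1 e w k : y1 != x -> sp x e false w = Some k ->
  0 < size w -> is_code (mk x y1 e w).
Proof.
move=> ny1 hw sw s t _ _.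
elim: s t => [|i s IH] [|j t] //=.
- by move/(congr1 size); rewrite size_cat; have := mk_pos x y1 e j sw; case: (size _).
- by move/(congr1 size); rewrite size_cat; have := mk_pos x y1 e i sw; case: (size _).
move=> E; case: (eqVneq i j) => [eij|nij].
  by subst j; rewrite (IH t) //; move: (congr1 (drop (size (mk x y1 e w i))) E); rewrite !drop_size_cat.
have := congr1 (sp x e false) E.
have := spK (i :: s) ny1 hw; have := spK (j :: t) ny1 hw.
rewrite /= => -> ->.
move: nij E; case: i => [[|[|[|i]]] Hi] //=; case: j => [[|[|[|j]]] Hj] //=.
all: move=> _ E; first [by case: E => /eqP; rewrite ?(negbTE ny1) // eq_sym (negbTE ny1)
  | by case: has => // -[]; lia].
Qed.

Lemma code_ext n m (v v' : 'I_m -> seq 'I_n) : v =1 v' -> is_code v -> is_code v'.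
Proof.
move=> vv H s t ns nt E; apply: H => //.
by rewrite (eq_map vv) (eq_map vv).
Qed.

Lemma rev_flatten n m (v : 'I_m -> seq 'I_n) s :
  rev (flatten (map v s)) = flatten (map (fun i => rev (v i)) (rev s)).
Proof.
elim: s => [|i s IH] //=.
by rewrite rev_cat IH rev_cons map_rcons -cats1 flatten_cat /= cats0.
Qed.

Lemma code_rev n m (v : 'I_m -> seq 'I_n) : is_code (fun i => rev (v i)) -> is_code v.
Proof.
move=> H s t ns nt E.
have : rev s = rev t.
  apply: H; first by rewrite -size_eq0 size_rev size_eq0.
  - by rewrite -size_eq0 size_rev size_eq0.
  by rewrite -!rev_flatten E.
by move/(congr1 rev); rewrite !revK.
Qed.

Lemma code_suffix x y2 w k : y2 != x -> sp x x false (rev w) = Some k ->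
  0 < size w -> is_code (mk x x y2 w).
Proof.
move=> ny hw sw; apply: code_rev.
apply: (@code_ext _ _ (mk x y2 x (rev w))).
  by case=> [[|[|[|i]]] Hi].
by apply: code_stuck ny hw _; rewrite size_rev.
Qed.

Lemma not_code x w : ~ is_code (mk x x x w).
Proof.
move=> H.
have := H [:: ord0; ord0] [:: @Ordinal 3 1 isT] isT isT erefl.
by [].
Qed.

Lemma prefix_code_iff x y1 y2 w : 2 < size w ->
  is_prefix_code (mk x y1 y2 w) <->
  [&& x != y1, ~~ prefix [:: x] w & ~~ prefix [:: y1; y2] w].
Proof.
move=> sw; split.
  move=> H.
  have h01 := H ord0 (@Ordinal 3 1 isT).
  have h02 := H ord0 (@Ordinal 3 2 isT).
  have h12 := H (@Ordinal 3 1 isT) (@Ordinal 3 2 isT).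
  move: h01 h02 h12 => /=; rewrite andbT => -> -> ->; by [].
move=> /and3P[h1 h2 h3].
have nw1 : prefix w [:: x] = false.
  by apply/negP => /size_prefix /=; rewrite leqNgt (ltn_trans _ sw).
have nw2 : prefix w [:: y1; y2] = false.
  by apply/negP => /size_prefix /=; rewrite leqNgt sw.
move=> [[|[|[|i]]] Hi] [[|[|[|j]]] Hj] //=; rewrite ?eqxx ?andbT ?prefix_refl ?nw1 ?nw2 //.
all: try by apply/negbTE.
by rewrite andbF.
Qed.

Lemma sum_cons (T : finType) n (F : n.+1.-tuple T -> nat) :
  \sum_(t : n.+1.-tuple T) F t = \sum_(x : T) \sum_(t : n.-tuple T) F (cons_tuple x t).
Proof.
rewrite pair_bigA /=.
rewrite (reindex (fun p : T * n.-tuple T => cons_tuple p.1 p.2)) //.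
exists (fun t => (thead t, behead_tuple t)) => [[x t]|t] _ /=.
  by rewrite theadE; congr pair; apply: val_inj.
by rewrite [RHS]tuple_eta; apply: val_inj.
Qed.

Definition A (x e : 'I_2) (st : bool) n := \sum_(t : n.-tuple 'I_2) (sp x e st t == None : nat).

Lemma A_le x e st n : A x e st n <= 2 ^ n.
Proof.
rewrite /A; apply: (@leq_trans (\sum_(t : n.-tuple 'I_2) 1)).
  by apply: leq_sum => t _; case: (_ == _).
by rewrite sum1_card card_tuple card_ord.
Qed.

Lemma A_true x e n : A x e true n.+1 = A x e false n.
Proof.
rewrite /A sum_cons.
rewrite (eq_bigr (fun u => if u == e then A x e false n else 0)); last first.
  move=> u _ /=; case: (u == e) => /=.
    by apply: eq_bigr => t _; case: (sp _ _ _ _).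
  by rewrite big1.
by rewrite -big_mkcond /= big_pred1_eq.
Qed.

Lemma A_false x e n : A x e false n.+1 = A x e false n + A x e true n.
Proof.
rewrite /A sum_cons (bigD1 x) //= eqxx /=.
congr addn.
  by apply: eq_bigr => t _; case: (sp _ _ _ _).
rewrite (eq_bigr (fun _ => A x e true n)); last first.
  move=> u ux; rewrite ux; apply: eq_bigr => t _; by case: (sp _ _ _ _).
by rewrite sum_nat_const cardC1 card_ord mul1n.
Qed.

Lemma A_bound x e n : 4 ^ n * A x e false n <= 2 * 7 ^ n.
Proof.
suff: 4 ^ n * A x e false n <= 2 * 7 ^ n /\ 4 ^ n.+1 * A x e false n.+1 <= 2 * 7 ^ n.+1 by case.
elim: n => [|n [IH1 IH2]].
  split; first by rewrite expn0 mul1n; apply: leq_trans (A_le _ _ _ _) _.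
  by apply: leq_trans (leq_mul (leqnn (4 ^ 1)) (A_le x e false 1)) _.
split=> //.
rewrite A_false A_true mulnDr.
move: IH1 IH2; rewrite !expnS.
set a := 4 ^ n; set b := 7 ^ n; set f0 := A x e false n; set f1 := A x e false n.+1.
nia.
Qed.

Lemma A_rev x e n :
  \sum_(t : n.-tuple 'I_2) (sp x e false (rev t) == None : nat) = A x e false n.
Proof.
rewrite /A (reindex (fun t : n.-tuple 'I_2 => rev_tuple t)) //=.
  by apply: eq_bigr => t _; rewrite revK.
by exists (fun t : n.-tuple 'I_2 => rev_tuple t) => t _; apply: val_inj; rewrite /= revK.
Qed.
Definition TT c := ('I_2 * ('I_2 * ('I_2 * c.-tuple 'I_2)))%type.

Definition mkp c (p : TT c) := mk p.1 p.2.1 p.2.2.1 (val p.2.2.2).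

Definition hW c (p : TT c) : words_of_lengths 2 [:: 1; 2; c] :=
  @finfun _ (fun i : 'I_3 => (nth 0 [:: 1; 2; c] i).-tuple 'I_2)
    (fun i => insubd (nseq_tuple (nth 0 [:: 1; 2; c] i) (ord0 : 'I_2)) (mkp p i)).

Lemma hW_words c (p : TT c) : as_words (hW p) =1 mkp p.
Proof.
move=> i; rewrite /as_words /hW ffunE val_insubd.
case: p => x [y1 [y2 w]].
by case: i => [[|[|[|i]]] Hi] //=; rewrite size_tuple eqxx.
Qed.

Definition o0 : 'I_3 := @Ordinal 3 0 isT.
Definition o1 : 'I_3 := @Ordinal 3 1 isT.
Definition o2 : 'I_3 := @Ordinal 3 2 isT.

Definition gW c (f : words_of_lengths 2 [:: 1; 2; c]) : TT c :=
  (@tnth 1 _ (f o0) ord0, (@tnth 2 _ (f o1) ord0, (@tnth 2 _ (f o1) ord_max, (f o2 : c.-tuple 'I_2)))).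

Lemma tuple1E (T : Type) (t : 1.-tuple T) : val t = [:: tnth t ord0].
Proof. by case: t => [[|a [|]]] //= H; rewrite (tnth_nth a). Qed.

Lemma tuple2E (T : Type) (t : 2.-tuple T) : val t = [:: tnth t ord0; tnth t ord_max].
Proof. by case: t => [[|a [|b [|]]]] //= H; rewrite !(tnth_nth a). Qed.

Lemma gW_words c (f : words_of_lengths 2 [:: 1; 2; c]) : as_words f =1 mkp (gW f).
Proof.
move=> i; rewrite /mkp /gW.
case: i => [[|[|[|i]]] Hi] //.
- have -> : Ordinal Hi = o0 by apply: val_inj.
  exact: (tuple1E (f o0)).
- have -> : Ordinal Hi = o1 by apply: val_inj.
  exact: (tuple2E (f o1)).
- by have -> : Ordinal Hi = o2 by apply: val_inj.
Qed.

Lemma mkp_inj c : injective (@mkp c).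
Proof.
move=> [x [y1 [y2 w]]] [x' [y1' [y2' w']]] E.
have E0 := congr1 (fun f => f o0) E; have E1 := congr1 (fun f => f o1) E.
have E2 := congr1 (fun f => f o2) E.
move: E0 E1 E2; rewrite /mkp /= => -[->] [-> ->] /val_inj ->; by [].
Qed.

Lemma hW_inj c : injective (@hW c).
Proof.
move=> p q E; apply: mkp_inj; apply/funext => i.
by rewrite -!hW_words E.
Qed.

Lemma gW_inj c : injective (@gW c).
Proof.
move=> f f' E; apply/ffunP => i; apply: val_inj.
by have := gW_words f i; rewrite E -gW_words.
Qed.

Lemma hW_bij c : bijective (@hW c).
Proof.
apply: inj_card_bij; first exact: hW_inj.
exact: leq_card (@gW_inj c).
Qed.

Lemma cardP (T : finType) (P : pred T) : #|[set t | P t]| = \sum_(t : T) (P t : nat).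
Proof.
rewrite -sum1_card big_mkcond /=; apply: eq_bigr => t _; rewrite inE.
by case: (P t).
Qed.

Lemma UD_sum c : #|UD 2 [:: 1; 2; c]| =
  \sum_(p : TT c) (`[< is_code (mkp p) >] : nat).
Proof.
rewrite /UD cardP (reindex (@hW c)); last by apply: onW_bij; exact: hW_bij.
apply: eq_bigr => p _.
have E := hW_words p.
by congr nat_of_bool; apply/asboolP/asboolP => H; apply: code_ext H => // i; rewrite E.
Qed.

Lemma PR_sum c : #|PR 2 [:: 1; 2; c]| =
  \sum_(p : TT c) (`[< is_code (mkp p) >] && `[< is_prefix_code (mkp p) >] : nat).
Proof.
rewrite /PR cardP (reindex (@hW c)); last by apply: onW_bij; exact: hW_bij.
apply: eq_bigr => p _.
have E : as_words (hW p) = mkp p by apply/funext => i; rewrite hW_words.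
by rewrite E.
Qed.

Lemma PR_UD c : #|PR 2 [:: 1; 2; c]| <= #|UD 2 [:: 1; 2; c]|.
Proof.
apply: subset_leq_card; apply/fintype.subsetP => f; rewrite !inE; by case/andP => /asboolP.
Qed.

Lemma sum_pair (I J : finType) (F : I * J -> nat) :
  \sum_(p : I * J) F p = \sum_(i : I) \sum_(j : J) F (i, j).
Proof. by rewrite pair_bigA; apply: eq_bigr => -[]. Qed.

Definition o20 : 'I_2 := @Ordinal 2 0 isT.
Definition o21 : 'I_2 := @Ordinal 2 1 isT.

Lemma sum_I2 (G : 'I_2 -> nat) : \sum_(u : 'I_2) G u = G o20 + G o21.
Proof.
rewrite big_ord_recl big_ord_recl big_ord0 addn0.
by congr (G _ + G _); apply: val_inj.
Qed.

Lemma I2_cases (x : 'I_2) : x = o20 \/ x = o21.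
Proof. by case: x => [[|[|?]] H]; [left|right|]; try apply: val_inj. Qed.

Definition U3 c x y1 y2 := \sum_(w : c.-tuple 'I_2) (`[< is_code (mk x y1 y2 w) >] : nat).
Definition P3 c x y1 y2 := \sum_(w : c.-tuple 'I_2)
   (`[< is_code (mk x y1 y2 w) >] && `[< is_prefix_code (mk x y1 y2 w) >] : nat).

Lemma UD_U3 c : #|UD 2 [:: 1; 2; c]| = \sum_x \sum_y1 \sum_y2 U3 c x y1 y2.
Proof.
rewrite UD_sum sum_pair; apply: eq_bigr => x _.
rewrite sum_pair; apply: eq_bigr => y1 _.
by rewrite sum_pair; apply: eq_bigr => y2 _.
Qed.

Lemma PR_P3 c : #|PR 2 [:: 1; 2; c]| = \sum_x \sum_y1 \sum_y2 P3 c x y1 y2.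
Proof.
rewrite PR_sum sum_pair; apply: eq_bigr => x _.
rewrite sum_pair; apply: eq_bigr => y1 _.
by rewrite sum_pair; apply: eq_bigr => y2 _.
Qed.

Lemma U3_bad c x : U3 c x x x = 0.
Proof.
rewrite /U3 big1 // => w _.
by case: asboolP => // /not_code.
Qed.

Lemma U3_le c x y1 y2 : U3 c x y1 y2 <= 2 ^ c.
Proof.
rewrite /U3; apply: (@leq_trans (\sum_(t : c.-tuple 'I_2) 1)).
  by apply: leq_sum => t _; case: (asbool _).
by rewrite sum1_card card_tuple card_ord.
Qed.

Lemma U3_pref c x y1 y2 : 0 < c -> y1 != x -> 2 ^ c <= U3 c x y1 y2 + A x y2 false c.
Proof.
move=> c0 ny.
rewrite /U3 /A -big_split /=.
apply: (@leq_trans (\sum_(t : c.-tuple 'I_2) 1)).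
  by rewrite sum1_card card_tuple card_ord.
apply: leq_sum => w _.
case E: (sp x y2 false w) => [k|] /=; last by rewrite addn1.
rewrite addn0; case: asboolP => // H; exfalso; apply: H.
by apply: code_stuck ny E _; rewrite size_tuple.
Qed.

Lemma U3_suff c x y2 : 0 < c -> y2 != x -> 2 ^ c <= U3 c x x y2 + A x x false c.
Proof.
move=> c0 ny.
rewrite /U3 -A_rev -big_split /=.
apply: (@leq_trans (\sum_(t : c.-tuple 'I_2) 1)).
  by rewrite sum1_card card_tuple card_ord.
apply: leq_sum => w _.
case E: (sp x x false (rev w)) => [k|] /=; last by rewrite addn1.
rewrite addn0; case: asboolP => // H; exfalso; apply: H.
by apply: code_suffix ny E _; rewrite size_tuple.
Qed.

Lemma I2_ne (a b c : 'I_2) : a != b -> c != b -> a = c.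
Proof.
by have [->|->] := I2_cases a; have [->|->] := I2_cases b; have [->|->] := I2_cases c.
Qed.

Lemma PF x y1 y2 w : 2 < size w ->
  (`[< is_code (mk x y1 y2 w) >] && `[< is_prefix_code (mk x y1 y2 w) >]) =
  [&& x != y1, ~~ prefix [:: x] w & ~~ prefix [:: y1; y2] w].
Proof.
move=> sw; case Hb: [&& _, _ & _].
  have Hp := (proj2 (prefix_code_iff x y1 y2 sw) Hb).
  move: Hb sw Hp; case: w => [|z1 [|z2 r]] //= /and3P[h1 h2 h3] _ Hp.
  rewrite andbT in h2.
  have ez : z1 = y1 by apply: (I2_ne (b := x)); rewrite eq_sym.
  subst z1; rewrite eqxx /= prefix0s andbT in h3.
  have Hs : sp x y2 false [:: y1, z2 & r] = Some 1.
    by rewrite /= eq_sym h1 /= eq_sym (negbTE h3).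
  apply/andP; split; apply/asboolP => //.
  have h1' : y1 != x by rewrite eq_sym.
  exact: code_stuck h1' Hs _.
apply/negbTE/negP => /andP[_ /asboolP H].
by move: (proj1 (prefix_code_iff x y1 y2 sw) H); rewrite Hb.
Qed.

Lemma P3_val n x y1 y2 : P3 n.+3 x y1 y2 = if x != y1 then 2 ^ n.+1 else 0.
Proof.
rewrite /P3 sum_cons.
rewrite (eq_bigr (fun z1 => \sum_(z2 : 'I_2)
   ([&& x != y1, x != z1 & ~~ ((y1 == z1) && (y2 == z2))] * 2 ^ n.+1))); last first.
  move=> z1 _; rewrite sum_cons; apply: eq_bigr => z2 _.
  rewrite (eq_bigr (fun _ => nat_of_bool [&& x != y1, x != z1 & ~~ ((y1 == z1) && (y2 == z2))])).
    by rewrite sum_nat_const card_tuple card_ord mulnC.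
  move=> t _; rewrite PF /=; last by rewrite size_tuple.
  by rewrite prefix0s !andbT.
rewrite !sum_I2.
have e00 : (o20 == o20) = true by [].
have e01 : (o20 == o21) = false by [].
have e10 : (o21 == o20) = false by [].
have e11 : (o21 == o21) = true by [].
have [->|->] := I2_cases x; have [->|->] := I2_cases y1; have [->|->] := I2_cases y2;
  rewrite ?e00 ?e01 ?e10 ?e11 /= ?mul0n ?mul1n ?add0n ?addn0 //.
Qed.

Lemma e00 : (o20 == o20) = true. Proof. by []. Qed.
Lemma e01 : (o20 == o21) = false. Proof. by []. Qed.
Lemma e10 : (o21 == o20) = false. Proof. by []. Qed.
Lemma e11 : (o21 == o21) = true. Proof. by []. Qed.

Lemma PR_val n : #|PR 2 [:: 1; 2; n.+3]| = 2 ^ n.+3.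
Proof.
rewrite PR_P3 !sum_I2 !P3_val ?e00 ?e01 ?e10 ?e11 /=.
rewrite !expnS; lia.
Qed.

Lemma UD_up n : #|UD 2 [:: 1; 2; n.+3]| <= 6 * 2 ^ n.+3.
Proof.
rewrite UD_U3 !sum_I2 !U3_bad.
have := U3_le n.+3; set K := 2 ^ n.+3 => H.
have := H o20 o20 o21; have := H o20 o21 o20; have := H o20 o21 o21.
have := H o21 o20 o20; have := H o21 o20 o21; have := H o21 o21 o20.
lia.
Qed.

Definition D c := 2 * (A o20 o20 false c + A o20 o21 false c + A o21 o20 false c + A o21 o21 false c).

Lemma UD_low n : 6 * 2 ^ n.+3 <= #|UD 2 [:: 1; 2; n.+3]| + D n.+3.
Proof.
rewrite UD_U3 !sum_I2 !U3_bad /D.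
have h1 := @U3_pref n.+3 o20 o21 o20 isT isT.
have h2 := @U3_pref n.+3 o20 o21 o21 isT isT.
have h3 := @U3_pref n.+3 o21 o20 o20 isT isT.
have h4 := @U3_pref n.+3 o21 o20 o21 isT isT.
have h5 := @U3_suff n.+3 o20 o21 isT isT.
have h6 := @U3_suff n.+3 o21 o20 isT isT.
lia.
Qed.

Lemma D_bound c : 4 ^ c * D c <= 16 * 7 ^ c.
Proof.
rewrite /D.
have := A_bound o20 o20 c; have := A_bound o20 o21 c.
have := A_bound o21 o20 c; have := A_bound o21 o21 c.
nia.
Qed.
Unset Implicit Arguments.
Local Open Scope classical_set_scope.
Local Open Scope ring_scope.
Lemma rho_bounds (R : realType) n :
  (6%:R : R)^-1 <= rho R 2 [:: 1%N; 2%N; n.+3] <= (6%:R : R)^-1 + 16 * (7 / 8) ^+ n.+3.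
Proof.
rewrite /rho PR_val.
have hU1 := UD_up n; have hU2 := UD_low n; have hD := D_bound n.+3.
have hPU := PR_UD n.+3; rewrite PR_val in hPU.
move: hU1 hU2 hD hPU.
set U := #|UD _ _|; set D' := D n.+3 => hU1 hU2 hD hPU.
set q : R := (7 / 8) ^+ n.+3.
set p : R := (2 ^ n.+3)%:R.
have hp : 0 < p by rewrite ltr0n expn_gt0.
have hU1' : (U%:R : R) <= 6 * p by rewrite -natrM ler_nat.
have hU2' : 6 * p <= U%:R + D'%:R by rewrite -natrM -natrD ler_nat.
have hPU' : p <= U%:R by rewrite ler_nat.
have hq : 0 <= q by rewrite exprn_ge0 // divr_ge0.
have hD' : (D'%:R : R) <= 16 * q * p.
  have h4 : (0 : R) < (4 ^ n.+3)%:R by rewrite ltr0n expn_gt0.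
  rewrite -(ler_pM2l h4).
  have -> : (4 ^ n.+3)%:R * (16 * q * p) = ((16 * 7 ^ n.+3)%N%:R : R).
    rewrite /q /p !natrX natrM natrX.
    have E : (4 * (7 / 8) * 2 : R) = 7 by lra.
    rewrite -[X in _ = 16 * X ^+ _]E !exprMn; ring.
  by rewrite -natrM ler_nat.
have hu : 0 < (U%:R : R) by apply: lt_le_trans hPU'.
apply/andP; split.
  by rewrite ler_pdivlMr //; lra.
rewrite ler_pdivrMr //.
have h1 : q * p <= q * U%:R by rewrite ler_wpM2l.
have h2 : 0 <= q * U%:R by rewrite mulr_ge0.
nra.
Qed.

Theorem theorem6 (R : realType) :
  rho R 2 [:: 1%N; 2%N; c] @[c --> \oo] --> ((6%:R : R)^-1).
Proof.
apply: (@squeeze_cvgr _ _ _ _ (cst (6%:R : R)^-1) (fun c => (6%:R : R)^-1 + 16 * (7 / 8) ^+ c)).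
- near=> c.
  have : (3 <= c)%N by near: c; exact: nbhs_infty_ge.
  move=> c3; have [n hn] : exists n, c = n.+3 by exists (c - 3)%N; lia.
  rewrite hn; exact: rho_bounds.
- exact: cvg_cst.
- rewrite -[X in _ --> X]addr0; apply: cvgD; first exact: cvg_cst.
  rewrite -(mulr0 16); apply: cvgMr.
  apply: cvg_expr.
  by rewrite ger0_norm ?divr_ge0 // ltr_pdivrMr // mul1r ltr_nat.
Unshelve. all: by end_near.
Qed.
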